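(* Let $(H;\langle\cdot,\cdot\rangle)$ be an inner product space over $\mathbb{K}\in\{\mathbb{R},\mathbb{C}\}$, and let $\{e_i\}_{i\in I}$ and $\{f_j\}_{j\in J}$ be two finite orthonormal families of vectors in $H$. Then for any $x,y\in H\setminus\{0\}$, $$\left|\sum_{i\in I}\langle x,e_i\rangle\langle e_i,y\rangle+\sum_{j\in J}\langle x,f_j\rangle\langle f_j,y\rangle-2\sum_{i\in I,\,j\in J}\langle x,e_i\rangle\langle f_j,y\rangle\langle e_i,f_j\rangle-\frac12\langle x,y\rangle\right|\le\frac12\|x\|\,\|y\|.$$ Equality holds if and only if there exists $\lambda\in\mathbb{K}$ such that $$x-\lambda y=2\left(\sum_{i\in I}\langle x,e_i\rangle e_i-\lambda\sum_{j\in J}\langle y,f_j\rangle f_j\right).$$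
   Context: The inner product is linear in the first argument and conjugate-linear in the second; $\|x\|=\langle x,x\rangle^{1/2}$. A family $\{e_i\}_{i\in I}$ is orthonormal if $\langle e_i,e_j\rangle=1$ for $i=j$ and $0$ for $i\neq j$. *)

(* Defs.v *)
From HB Require Import structures.
From mathcomp Require Import all_boot all_order all_algebra.
From mathcomp Require Import complex.
From mathcomp Require Import reals.
Set Implicit Arguments. Unset Strict Implicit. Unset Printing Implicit Defensive.
Import Order.TTheory GRing.Theory Num.Theory.
Local Open Scope ring_scope.

Definition is_inner_product (K : numFieldType) (conj : K -> K)
    (V : lmodType K) (ip : V -> V -> K) : Prop :=
  [/\ (forall (a : K) (x y z : V), ip (a *: x + y) z = a * ip x z + ip y z),
      (forall x y : V, ip x y = conj (ip y x)),
      (forall x : V, 0 <= ip x x) &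
      (forall x : V, ip x x = 0 -> x = 0)].

Definition orthonormal (K : numFieldType) (V : lmodType K) (ip : V -> V -> K)
    (I : finType) (e : I -> V) : Prop :=
  forall i j : I, ip (e i) (e j) = (i == j)%:R.

Definition thm21_over (K : numFieldType) (conj : K -> K) (sqrtK : K -> K) : Prop :=
  forall (V : lmodType K) (ip : V -> V -> K),
  is_inner_product conj ip ->
  forall (I J : finType) (e : I -> V) (f : J -> V),
  orthonormal ip e -> orthonormal ip f ->
  forall x y : V, x != 0 -> y != 0 ->
  let nrm := fun v : V => sqrtK (ip v v) in
  let S := \sum_(i : I) ip x (e i) * ip (e i) y
         + \sum_(j : J) ip x (f j) * ip (f j) y
         - 2 * (\sum_(i : I) \sum_(j : J) ip x (e i) * ip (f j) y * ip (e i) (f j))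
         - 2^-1 * ip x y in
  `|S| <= 2^-1 * (nrm x * nrm y) /\
  (`|S| = 2^-1 * (nrm x * nrm y) <->
   exists lam : K,
     x - lam *: y = 2 *: (\sum_(i : I) ip x (e i) *: e i
                          - lam *: \sum_(j : J) ip y (f j) *: f j)).

(* Main.v *)
Require Import Defs.
From HB Require Import structures.
From mathcomp Require Import all_boot all_order all_algebra.
From mathcomp Require Import complex.
From mathcomp Require Import reals.
From mathcomp Require Import ring.
Import Order.TTheory GRing.Theory Num.Theory.
Local Open Scope ring_scope.

Section Gen.
Variable K : numFieldType.
Variable conj : K -> K.
Hypothesis conjD : {morph conj : a b / a + b}.
Hypothesis conjM : {morph conj : a b / a * b}.
Hypothesis conj_id : forall a, 0 <= a -> conj a = a.
Hypothesis normK : forall a, `|a| ^+ 2 = a * conj a.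
Variable sq : K -> K.
Hypothesis sq_ge0 : forall a, 0 <= a -> 0 <= sq a.
Hypothesis sqK : forall a, 0 <= a -> sq a ^+ 2 = a.

Section IP.
Variable V : lmodType K.
Variable ip : V -> V -> K.
Hypothesis hip : is_inner_product conj ip.

Lemma conj0 : conj 0 = 0. Proof. exact: conj_id. Qed.
Lemma conj2 : conj 2 = 2. Proof. exact: conj_id. Qed.
Lemma conjN a : conj (- a) = - conj a.
Proof. by apply/eqP; rewrite -subr_eq0 opprK -conjD addNr conj0. Qed.

Lemma ipS x y : ip x y = conj (ip y x). Proof. by case: hip. Qed.
Lemma ipDl x y z : ip (x + y) z = ip x z + ip y z.
Proof. by have [h _ _ _] := hip; rewrite -{1}[x]scale1r h mul1r. Qed.
Lemma ip0l z : ip 0 z = 0.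
Proof. have h := ipDl 0 0 z; rewrite addr0 in h. by apply: (addrI (ip 0 z)); rewrite addr0 -h. Qed.
Lemma ipZl a x z : ip (a *: x) z = a * ip x z.
Proof. by have [h _ _ _] := hip; rewrite -[a *: x]addr0 h ip0l addr0. Qed.
Lemma ipBl x y z : ip (x - y) z = ip x z - ip y z.
Proof. by rewrite -scaleN1r ipDl ipZl mulN1r. Qed.
Lemma ipDr x y z : ip z (x + y) = ip z x + ip z y.
Proof. by rewrite ipS ipDl conjD -!ipS. Qed.
Lemma ipZr a x z : ip z (a *: x) = conj a * ip z x.
Proof. by rewrite ipS ipZl conjM -ipS. Qed.
Lemma ipBr x y z : ip z (x - y) = ip z x - ip z y.
Proof. by rewrite -scaleN1r ipDr ipZr conjN conj_id ?ler01 // mulN1r. Qed.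
Lemma ip_ge0 x : 0 <= ip x x. Proof. by case: hip. Qed.
Lemma ip_eq0 x : ip x x = 0 -> x = 0. Proof. by have [_ _ _ h] := hip; apply: h. Qed.

Lemma ip_suml (I : finType) (a : I -> K) (g : I -> V) z :
  ip (\sum_i a i *: g i) z = \sum_i a i * ip (g i) z.
Proof.
rewrite (big_morph (fun v => ip v z) (fun u w => ipDl u w z) (ip0l z)).
by apply: eq_bigr => i _; rewrite ipZl.
Qed.

Lemma ip_sumr (I : finType) (a : I -> K) (g : I -> V) z :
  ip z (\sum_i a i *: g i) = \sum_i conj (a i) * ip z (g i).
Proof.
rewrite ipS ip_suml (big_morph conj conjD conj0).
by apply: eq_bigr => i _; rewrite conjM -ipS.
Qed.

Lemma ip_exp2 A B C D :
  ip (2 *: A - B) (2 *: C - D) = 4 * ip A C - 2 * ip A D - 2 * ip B C + ip B D.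
Proof. rewrite !(ipBl, ipBr, ipZl, ipZr) conj2; ring. Qed.

Lemma proj_norm (I : finType) (e : I -> V) : Defs.orthonormal ip e -> forall x : V,
  ip (2 *: (\sum_i ip x (e i) *: e i) - x) (2 *: (\sum_i ip x (e i) *: e i) - x) = ip x x.
Proof.
move=> he x; set P := \sum_i _.
have hPe k : ip P (e k) = ip x (e k).
  rewrite ip_suml (bigD1 k) //= he eqxx mulr1 big1 ?addr0 // => i /negbTE ik.
  by rewrite he ik mulr0.
have hPP : ip P P = ip x P.
  by rewrite {2}/P ip_sumr [RHS]ip_sumr; apply: eq_bigr => i _; rewrite hPe.
have hPx : ip P x = ip x P by rewrite ipS -hPP -ipS.
rewrite ip_exp2 hPP hPx; ring.
Qed.

Lemma CS u v : v != 0 ->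
  `|ip u v| ^+ 2 <= ip u u * ip v v /\
  (`|ip u v| ^+ 2 = ip u u * ip v v <-> exists lam, u = lam *: v).
Proof.
move=> v0.
set a := ip u u; set b := ip v v; set c := ip u v.
have b0 : b != 0 by apply: contra v0 => /eqP /ip_eq0 ->.
have bp : 0 < b by rewrite lt_def b0 ip_ge0.
pose t := c / b; pose w := u - t *: v.
have hw : ip w w = a - `|c| ^+ 2 / b.
  have cb : conj b^-1 = b^-1 by apply: conj_id; rewrite invr_ge0 ltW.
  rewrite /w !(ipBl, ipBr, ipZl, ipZr) -/a -/b -/c /t conjM cb.
  rewrite [ip v u]ipS -/c normK.
  by field.
split.
  have := ip_ge0 w; rewrite hw subr_ge0 ler_pdivrMr //.
have e1 : `|c| ^+ 2 = a * b <-> ip w w = 0.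
  rewrite hw; split => [->|/eqP]; first by rewrite mulfK // subrr.
  by rewrite subr_eq0 => /eqP ->; rewrite divfK.
rewrite e1; split.
  by move/ip_eq0 => /eqP; rewrite subr_eq0 => /eqP ->; exists t.
case=> lam hu.
have -> : w = 0.
  by rewrite /w /t /c hu ipZl -/b mulfK // subrr.
exact: ip0l.
Qed.

End IP.

Lemma gen_thm : thm21_over conj sq.
Proof.
move=> V ip hip I J e f he hf x y x0 y0 nrm S.
set P := \sum_i ip x (e i) *: e i.
set Q := \sum_j ip y (f j) *: f j.
set u := 2 *: P - x. set v := 2 *: Q - y.
have hS : S = - 2^-1 * ip u v.
  have h1 : \sum_i ip x (e i) * ip (e i) y = ip P y by rewrite ip_suml.
  have h2 : \sum_j ip x (f j) * ip (f j) y = ip x Q.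
    by rewrite ip_sumr //; apply: eq_bigr => j _; rewrite -(ipS _ _ hip) mulrC.
  have h3 : \sum_i \sum_j ip x (e i) * ip (f j) y * ip (e i) (f j) = ip P Q.
    rewrite ip_suml //; apply: eq_bigr => i _; rewrite ip_sumr // mulr_sumr.
    by apply: eq_bigr => j _; rewrite -(ipS _ _ hip) mulrA.
  rewrite /S h1 h2 h3 /u /v ip_exp2 //.
  by field; rewrite ?pnatr_eq0.
have vn0 : v != 0.
  apply/eqP => hv; have := proj_norm _ _ hip _ _ hf y; rewrite -/Q -/v hv ip0l // => /esym/(ip_eq0 _ _ hip) y00.
  by rewrite y00 eqxx in y0.
have [cs1 cs2] := CS _ _ hip u _ vn0.
have hu : ip u u = ip x x := proj_norm _ _ hip _ _ he x.
have hv : ip v v = ip y y := proj_norm _ _ hip _ _ hf y.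
rewrite hu hv in cs1 cs2.
have h2p : 0 < 2^-1 :> K by rewrite invr_gt0 ltr0n.
have hn : `|S| = 2^-1 * `|ip u v|.
  by rewrite hS normrM normrN (ger0_norm (ltW h2p)).
have nn : 0 <= nrm x * nrm y by rewrite mulr_ge0 // sq_ge0 // ip_ge0.
have sqe : (nrm x * nrm y) ^+ 2 = ip x x * ip y y.
  by rewrite exprMn !sqK // ip_ge0.
split.
  rewrite hn ler_pM2l // -(ler_pXn2r (_ : 0 < 2)%N) ?nnegrE ?normr_ge0 // sqe //.
rewrite hn; transitivity (`|ip u v| = nrm x * nrm y).
  by split => [h|->] //; apply: (mulfI (lt0r_neq0 h2p) h).
transitivity (`|ip u v| ^+ 2 = ip x x * ip y y).
  by rewrite -sqe; split => [->//|/eqP]; rewrite eqrXn2 ?normr_ge0 // => /eqP.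
apply: (iff_trans cs2); split; case=> lam h; exists lam.
  have hx : x = 2 *: P - lam *: v by rewrite -h /u opprB addrC subrK.
  rewrite hx /v scalerBr scalerA scalerBr [2 *: (lam *: Q)]scalerA [2 * lam]mulrC.
  by rewrite opprB addrA addrAC addrK.
have hx : x = 2 *: (P - lam *: Q) + lam *: y by rewrite -h subrK.
rewrite /u /v hx !scalerBr !scalerA [2 * lam]mulrC.
by rewrite opprD opprB addrA [2 *: P + _]addrC subrK.
Qed.
End Gen.

Theorem theorem2p1 (R : realType) :
  thm21_over (fun a : R => a) (@Num.sqrt R) /\
  thm21_over (@conjc R) (@sqrtc R).
Proof.
split.
  apply: gen_thm => //.
  - by move=> a; rewrite real_normK ?num_real // expr2.
  - by move=> a a0; rewrite sqrtr_ge0.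
  - by move=> a a0; rewrite sqr_sqrtr.
apply: gen_thm.
- exact: rmorphD.
- exact: rmorphM.
- move=> a a0; have := ger0_Im a0; case: a a0 => a b a0 /= ->.
  by rewrite /conjc oppr0.
- by move=> a; rewrite sqr_normc.
- by move=> a a0; rewrite sqrtc_ge0.
- by move=> a _; rewrite sqr_sqrtc.
Qed.
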